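(* Let $G$ be a topological group and $A$ a topological $G$-module. Then the inclusion $j_h^*\colon C_{lc}^*(G,A)\hookrightarrow \mathrm{Tot}\,A_{lc}^{*,*}(G,A)^G$ induces an isomorphism in cohomology.
   Context: A topological $G$-module is an abelian topological group $A$ with an action of $G$ by group automorphisms such that the action map $G\times A\to A$ is continuous. For an identity neighbourhood $U$ of $G$ put $\Gamma_U^0:=G$ and, for $p\ge 1$, $\Gamma_U^p:=\{(g_0,\dots,g_p)\in G^{p+1}\mid g_i^{-1}g_j\in U \text{ for all } 0\le i,j\le p\}$. The group $G$ acts on maps $f\colon G^{n+1}\to A$ by $(g.f)(g_0,\dots,g_n)=g.\big(f(g^{-1}g_0,\dots,g^{-1}g_n)\big)$; the fixed points are the equivariant (homogeneous) cochains, with the differential $df(g_0,\dots,g_{n+1})=\sum_{i=0}^{n+1}(-1)^i f(g_0,\dots,\widehat{g_i},\dots,g_{n+1})$. $C_{lc}^n(G,A)$ denotes the group of $G$-equivariant maps $f\colon G^{n+1}\to A$ whose restriction to $\Gamma_U^n$ is continuous for some identity neighbourhood $U$. For $p,q\ge 0$, $A_{lc}^{p,q}(G,A)$ is the group of maps $f\colon G^{p+1}\times G^{q+1}\to A$ such that for some identity neighbourhood $U$ the restriction of $f$ to $G^{p+1}\times\Gamma_U^q$ is continuous, with differentials $d_h f(x_0,\dots,x_{p+1},\vec y)=\sum_{i=0}^{p+1}(-1)^i f(x_0,\dots,\widehat{x_i},\dots,x_{p+1},\vec y)$ and $d_v f(\vec x,y_0,\dots,y_{q+1})=(-1)^p\sum_{i=0}^{q+1}(-1)^i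 f(\vec x,y_0,\dots,\widehat{y_i},\dots,y_{q+1})$. $G$ acts on these by $(g.f)(\vec x,\vec y)=g.f(g^{-1}\vec x,g^{-1}\vec y)$ (diagonal action on all arguments), and $A_{lc}^{p,q}(G,A)^G$ denotes the fixed points, a sub double complex. $\mathrm{Tot}\,A_{lc}^{*,*}(G,A)^G$ is its total complex, $\mathrm{Tot}^n=\bigoplus_{p+q=n}A_{lc}^{p,q}(G,A)^G$ with differential $d_h+d_v$. The map $j_h^q\colon C_{lc}^q(G,A)\to A_{lc}^{0,q}(G,A)^G\subset \mathrm{Tot}^q$ is the row augmentation $j_h(f)(x_0,\vec y)=f(\vec y)$. *)

(* Defs.v *)
From HB Require Import structures.
From mathcomp Require Import all_boot all_order all_algebra.
From mathcomp Require Import all_classical all_reals.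
From mathcomp Require Import topology tvs.
Set Implicit Arguments. Unset Strict Implicit. Unset Printing Implicit Defensive.
Import Order.TTheory GRing.Theory Num.Theory.
Local Open Scope classical_set_scope.
Local Open Scope ring_scope.

Definition is_topological_group (T : topologicalType)
    (mul : T -> T -> T) (inv : T -> T) (e : T) : Prop :=
  [/\ (forall x y z, mul x (mul y z) = mul (mul x y) z),
      (forall x, mul e x = x /\ mul x e = x),
      (forall x, mul (inv x) x = e /\ mul x (inv x) = e),
      continuous (fun p : T * T => mul p.1 p.2) &
      continuous inv].

Definition is_topological_G_module (T : topologicalType)
    (mul : T -> T -> T) (e : T) (A : topologicalZmodType) (act : T -> A -> A) : Prop :=
  [/\ (forall g a b, act g (a + b) = act g a + act g b),
      (forall a, act e a = a),
      (forall g h a, act (mul g h) a = act g (act h a)) &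
      continuous (fun p : T * A => act p.1 p.2)].

Section Cochains.
Variables (T : topologicalType) (mul : T -> T -> T) (inv : T -> T) (e : T).
Variables (A : topologicalZmodType) (act : T -> A -> A).

Definition Tup (p : nat) := {ptws 'I_p.+1 -> T}.

Definition Gamma (U : set T) (p : nat) : set (Tup p) :=
  if p is 0 then setT
  else [set x | forall i j : 'I_p.+1, U (mul (inv (x i)) (x j))].
Arguments Gamma U p : clear implicits.

Definition CC (n : nat) := Tup n -> A.

Definition equivariant n (f : CC n) : Prop :=
  forall (g : T) (x : Tup n), act g (f (fun i => mul (inv g) (x i))) = f x.

Definition C_lc n (f : CC n) : Prop :=
  equivariant f /\
  exists U : set T, nbhs e U /\ {within Gamma U n, continuous f}.

Definition dC n (f : CC n) : CC n.+1 :=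
  fun x => \sum_(i < n.+2) (f (fun j => x (lift i j))) *~ ((-1) ^+ i).

(* the double complex: an element of the total complex is a family of
   maps F p q : G^{p+1} x G^{q+1} -> A, indexed by all p q *)
Definition TT := forall p q : nat, ('I_p.+1 -> T) -> ('I_q.+1 -> T) -> A.

Definition A_lc p q (f : ('I_p.+1 -> T) -> ('I_q.+1 -> T) -> A) : Prop :=
  exists U : set T, nbhs e U /\
    {within [set xy : Tup p * Tup q | Gamma U q xy.2],
       continuous (fun xy => f xy.1 xy.2)}.

Definition invariant p q (f : ('I_p.+1 -> T) -> ('I_q.+1 -> T) -> A) : Prop :=
  forall g x y, act g (f (fun i => mul (inv g) (x i)) (fun i => mul (inv g) (y i)))
                = f x y.

(* membership in Tot^n = (+)_{p+q=n} A_lc^{p,q}(G,A)^G *)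
Definition Tot (n : nat) (F : TT) : Prop :=
  forall p q, (p + q = n -> A_lc (F p q) /\ invariant (F p q)) /\
              (p + q <> n -> forall x y, F p q x y = 0).


Definition d_h p q (f : ('I_p.+1 -> T) -> ('I_q.+1 -> T) -> A) :
    ('I_p.+2 -> T) -> ('I_q.+1 -> T) -> A :=
  fun x y => \sum_(i < p.+2) (f (fun j => x (lift i j)) y) *~ ((-1) ^+ i).

Definition d_v p q (f : ('I_p.+1 -> T) -> ('I_q.+1 -> T) -> A) :
    ('I_p.+1 -> T) -> ('I_q.+2 -> T) -> A :=
  fun x y => (\sum_(i < q.+2) (f x (fun j => y (lift i j))) *~ ((-1) ^+ i)) *~ ((-1) ^+ p).

Definition dT (F : TT) : TT :=
  fun p q x y =>
    (match p as p0 return ('I_p0.+1 -> T) -> A with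
     | 0 => fun _ => 0
     | p'.+1 => fun x' => d_h (F p' q) x' y
     end x) +
    (match q as q0 return ('I_q0.+1 -> T) -> A with
     | 0 => fun _ => 0
     | q'.+1 => fun y' => d_v (F p q') x y'
     end y).

Definition Tsub (F F' : TT) : TT := fun p q x y => F p q x y - F' p q x y.

(* the row augmentation j_h : C^n -> A^{0,n} inside Tot^n,
   j_h(f)(x_0, y) = f(y) *)
Definition j_h n (f : CC n) : TT :=
  fun p q x y => if (p == 0%N) && (q == n) then f (fun i : 'I_n.+1 => y (inord i)) else 0.

Definition C_cobound (n : nat) : CC n -> Prop :=
  match n with
  | 0 => fun c => forall x, c x = 0
  | n'.+1 => fun c => exists b : CC n', C_lc b /\ dC b = c
  end.

Definition T_cobound (n : nat) (F : TT) : Prop :=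
  match n with
  | 0 => forall p q x y, F p q x y = 0
  | n'.+1 => exists W : TT, Tot n' W /\ dT W = F
  end.

(* j_h is a cochain map C_lc^* -> Tot, and the induced map on cohomology
   H^n(C_lc) -> H^n(Tot) is injective and surjective for every n *)
Definition jh_quasi_iso : Prop :=
  (forall n (c : CC n), C_lc c -> Tot n (j_h c)) /\
  (forall n (c : CC n), C_lc c -> dT (j_h c) = j_h (dC c)) /\
  (forall n (c : CC n), C_lc c -> dC c = (fun _ => 0) ->
      T_cobound n (j_h c) -> C_cobound c) /\
  (forall n (z : TT), Tot n z -> dT z = (fun p q _ _ => 0) ->
      exists c : CC n, [/\ C_lc c, dC c = (fun _ => 0) &
                           T_cobound n (Tsub (j_h c) z)]).

End Cochains.

(* Main.v *)
Require Import Defs.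
From HB Require Import structures.
From mathcomp Require Import all_boot all_order all_algebra.
From mathcomp Require Import all_classical all_reals.
From mathcomp Require Import topology tvs.
From mathcomp Require Import zify.
Set Implicit Arguments. Unset Strict Implicit. Unset Printing Implicit Defensive.
Import Order.TTheory GRing.Theory Num.Theory.
Local Open Scope classical_set_scope.
Local Open Scope ring_scope.
Section Alg.
Variables (B : zmodType) (S : Type).

Definition delta p (F : ('I_p.+1 -> S) -> B) : ('I_p.+2 -> S) -> B :=
  fun x => \sum_(i < p.+2) F (fun j => x (lift i j)) *~ ((-1) ^+ i).

Lemma bump_comm (i j k : nat) : (j < i)%N -> bump i (bump j k) = bump j (bump i.-1 k).
Proof.
rewrite /bump => ji.
case: (leqP j k) => jk; case: (leqP i.-1 k) => ik /=.
all: try (have -> : (i <= k.+1)%N = true by apply/idP; lia).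
all: try (have -> : (j <= k.+1)%N = true by apply/idP; lia).
all: try (have -> : (i <= k)%N = false by apply/negbTE; rewrite -ltnNge; lia).
all: try (have -> : (j <= k)%N = false by apply/negbTE; rewrite -ltnNge; lia).
all: try (have -> : (i <= k.+1)%N = false by apply/negbTE; rewrite -ltnNge; lia).
all: try (have -> : (i <= k)%N = true by apply/idP; lia).
all: rewrite ?jk //.
all: try lia.
Qed.

Definition sig_ p (q : 'I_p.+3 * 'I_p.+2) : 'I_p.+3 * 'I_p.+2 :=
  if (q.2 < q.1)%N then (inord q.2, inord q.1.-1) else (inord q.2.+1, inord q.1).

Lemma sig_inv p : involutive (@sig_ p).
Proof.
move=> [i j]; rewrite /sig_ /=.
have hi := ltn_ord i; have hj := ltn_ord j.
case: (ltnP j i) => ji /=.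
- rewrite !inordK; try lia.
  have -> : (i.-1 < j)%N = false by apply/negbTE; rewrite -leqNgt; lia.
  congr pair; apply: ord_inj; rewrite inordK /=; lia.
- rewrite !inordK; try lia.
  have -> : (i < j.+1)%N = true by apply/idP; lia.
  congr pair; apply: ord_inj; rewrite inordK /=; lia.
Qed.

Lemma delta2 p (F : ('I_p.+1 -> S) -> B) x : delta (@delta p F) x = 0.
Proof.
rewrite /delta.
under eq_bigr => i _ do rewrite mulrz_suml.
under eq_bigr => i _ do under eq_bigr => j _ do rewrite -mulrzA.
rewrite pair_bigA /=.
set f := fun q : 'I_p.+3 * 'I_p.+2 =>
   F (fun j0 => x (lift q.1 (lift q.2 j0))) *~ ((-1) ^+ q.2 * (-1) ^+ q.1).
rewrite (bigID (fun q : 'I_p.+3 * 'I_p.+2 => (q.2 < q.1)%N)) /=.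
rewrite (reindex_inj (inv_inj (@sig_inv p))) /=.
have P2 : forall q : 'I_p.+3 * 'I_p.+2, ((sig_ q).2 < (sig_ q).1)%N = ~~ (q.2 < q.1)%N.
  move=> [i j]; rewrite /sig_ /=.
  have hi := ltn_ord i; have hj := ltn_ord j.
  by case: (ltnP j i) => ji /=; rewrite !inordK; try lia.
under [X in X + _ = _]eq_bigl => q do rewrite P2.
rewrite -big_split /=; apply: big1 => -[i j] /= ji.
rewrite /sig_ /=.
have hi := ltn_ord i; have hj := ltn_ord j.
have -> : (j < i)%N = false by lia.
rewrite !inordK; try lia.
have -> : (fun j0 : 'I_p.+1 => x (lift (inord j.+1) (lift (inord i) j0))) =
   (fun j0 => x (lift i (lift j j0))).
  apply: funext => k; congr x; apply: ord_inj; rewrite /= !inordK; try lia.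
  by rewrite bump_comm //; lia.
by rewrite exprS mulN1r mulrN mulrNz [((-1) ^+ i * _)]mulrC addNr.
Qed.
End Alg.
Section Cont.
Lemma cont_pair (X Y Z : topologicalType) (f : X -> Y) (g : X -> Z) :
  continuous f -> continuous g -> continuous (fun x => (f x, g x)).
Proof. move=> cf cg x; apply: cvg_pair; [exact: cf | exact: cg]. Qed.

Lemma cont_fst (X Y : topologicalType) : continuous (@fst X Y).
Proof. move=> [x y]; exact: cvg_fst. Qed.
Lemma cont_snd (X Y : topologicalType) : continuous (@snd X Y).
Proof. move=> [x y]; exact: cvg_snd. Qed.

Lemma cw_comp (X Y Z : topologicalType) (S : set X) (B : set Y) (f : Y -> Z) (g : X -> Y) :
  {within B, continuous f} -> continuous g -> (forall z, S z -> B (g z)) ->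
  {within S, continuous (fun z => f (g z))}.
Proof.
move=> /subspace_continuousP hf cg hS; apply/subspace_continuousP => z Sz.
apply: cvg_trans _ (hf (g z) (hS z Sz)).
move=> W /= hW.
have := cg z _ hW. rewrite /within /=. move=> h.
rewrite nbhs_simpl /=. rewrite nbhs_simpl /= in h.
apply: (filterS _ h) => x hx Sx; exact: hx (hS x Sx).
Qed.

Variables (X : topologicalType) (A : topologicalZmodType) (S : set X).
Lemma cw_add (f g : X -> A) : {within S, continuous f} -> {within S, continuous g} ->
  {within S, continuous (fun z => f z + g z)}.
Proof.
move=> /subspace_continuousP hf /subspace_continuousP hg.
apply/subspace_continuousP => z Sz.
apply: (@continuous2_cvg _ A A A _ _ f g (fun a b => a + b)).
- exact: (@add_continuous A (f z, g z)).
- exact: hf.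
- exact: hg.
Qed.
Lemma cw_opp (f : X -> A) : {within S, continuous f} ->
  {within S, continuous (fun z => - f z)}.
Proof.
move=> /subspace_continuousP hf; apply/subspace_continuousP => z Sz.
apply: (@continuous_cvg _ _ _ _ _ f (fun a : A => - a)).
  exact: opp_continuous.
exact: hf.
Qed.
Lemma cw_post (Y : topologicalType) (f : X -> Y) (h : Y -> A) : continuous h ->
  {within S, continuous f} -> {within S, continuous (fun z => h (f z))}.
Proof.
move=> ch /subspace_continuousP hf; apply/subspace_continuousP => z Sz.
apply: (@continuous_cvg _ _ _ _ _ f h); [exact: ch | exact: hf].
Qed.
Lemma cw_cst (a : A) : {within S, continuous (fun _ : X => a)}.
Proof. apply: continuous_subspaceT => x; exact: cvg_cst. Qed.
Lemma cw_sub (f g : X -> A) : {within S, continuous f} -> {within S, continuous g} ->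
  {within S, continuous (fun z => f z - g z)}.
Proof. by move=> hf hg; apply: cw_add => //; apply: cw_opp. Qed.
Lemma cw_sum (I : Type) (r : seq I) (F : I -> X -> A) :
  (forall i, {within S, continuous (F i)}) ->
  {within S, continuous (fun z => \sum_(i <- r) F i z)}.
Proof.
move=> hF; elim: r => [|i r IH].
  under [X in continuous (from_subspace _ X)]eq_fun => z do rewrite big_nil.
  exact: cw_cst.
under [X in continuous (from_subspace _ X)]eq_fun => z do rewrite big_cons.
exact: cw_add.
Qed.
Lemma cw_mulrn (f : X -> A) n : {within S, continuous f} ->
  {within S, continuous (fun z => f z *+ n)}.
Proof.
move=> hf; elim: n => [|n IH].
  under [X in continuous (from_subspace _ X)]eq_fun => z do rewrite mulr0n.
  exact: cw_cst.
under [X in continuous (from_subspace _ X)]eq_fun => z do rewrite mulrS.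
exact: cw_add.
Qed.
Lemma cw_mulrz (f : X -> A) z : {within S, continuous f} ->
  {within S, continuous (fun x => f x *~ z)}.
Proof.
move=> hf; case: z => n.
  exact: cw_mulrn.
under [X in continuous (from_subspace _ X)]eq_fun => x do rewrite NegzE mulrNz.
by apply: cw_opp; apply: cw_mulrn.
Qed.
End Cont.

Lemma cont_ptws (X T : topologicalType) (n : nat) (g : X -> Tup T n) :
  (forall i, continuous (fun x => g x i)) -> continuous g.
Proof.
move=> H x. apply/cvg_sup => i.
move=> A /=. move=> hA. have := (@nbhsE (initial_topology (fun f : Tup T n => f i)) (g x)). move=> E. rewrite E in hA. move: hA => -[B [[C oC <-] Bgx] BA].
apply: (filterS BA). apply: (H i x). by apply: open_nbhs_nbhs.
Qed.

Lemma cont_comp2 (X Y Z : topologicalType) (f : X -> Y) (g : Y -> Z) :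
  continuous f -> continuous g -> continuous (fun x => g (f x)).
Proof. by move=> cf cg x; apply: continuous_comp; [exact: cf | exact: cg]. Qed.

Lemma cont_coord (T : topologicalType) p (i : 'I_p.+1) : continuous (fun x : Tup T p => x i).
Proof. exact: (@proj_continuous 'I_p.+1 (fun _ => T) i). Qed.
From mathcomp Require Import ring.
Section Main.
Variables (T : topologicalType) (mul : T -> T -> T) (inv : T -> T) (e : T)
  (A : topologicalZmodType) (act : T -> A -> A).
Hypothesis actD : forall g a b, act g (a + b) = act g a + act g b.

Local Notation TT := (TT T A).
Local Notation Tup := (Tup T).
Local Notation sg i := ((-1 : int) ^+ i).

Lemma act0 g : act g 0 = 0.
Proof. by apply: (addrI (act g 0)); rewrite -actD !addr0. Qed.
Lemma actN g a : act g (- a) = - act g a.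
Proof. by apply: (addrI (act g a)); rewrite -actD !subrr act0. Qed.
Lemma actB g a b : act g (a - b) = act g a - act g b.
Proof. by rewrite actD actN. Qed.
Lemma act_sum g I (r : seq I) (F : I -> A) :
  act g (\sum_(i <- r) F i) = \sum_(i <- r) act g (F i).
Proof.
elim: r => [|i r IH]; first by rewrite !big_nil act0.
by rewrite !big_cons actD IH.
Qed.
Lemma act_mulrn g a n : act g (a *+ n) = act g a *+ n.
Proof. by elim: n => [|n IH]; rewrite ?mulr0n ?act0 // !mulrS actD IH. Qed.
Lemma act_mulrz g a z : act g (a *~ z) = act g a *~ z.
Proof. by case: z => n; rewrite ?NegzE ?mulrNz ?actN act_mulrn. Qed.

Lemma deltaD p (F G : ('I_p.+1 -> T) -> A) x :
  delta (fun x => F x + G x) x = delta F x + delta G x.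
Proof. by rewrite /delta -big_split; apply: eq_bigr => i _; rewrite mulrzDl. Qed.
Lemma deltaN p (F : ('I_p.+1 -> T) -> A) x :
  delta (fun x => - F x) x = - delta F x.
Proof. by rewrite /delta -sumrN; apply: eq_bigr => i _; rewrite mulNrz. Qed.
Lemma deltaZ p (F : ('I_p.+1 -> T) -> A) z x :
  delta (fun x => F x *~ z) x = delta F x *~ z.
Proof.
rewrite /delta mulrz_suml; apply: eq_bigr => i _.
by rewrite -!mulrzA mulrC.
Qed.
Lemma delta_z p (F : ('I_p.+1 -> T) -> A) x :
  (forall x, F x = 0) -> delta F x = 0.
Proof. by move=> h; rewrite /delta big1 // => i _; rewrite h mul0rz. Qed.

Section DHV.
Variables (p q : nat).
Implicit Types (f g : ('I_p.+1 -> T) -> ('I_q.+1 -> T) -> A).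
Lemma d_hD f g x y : d_h (fun x y => f x y + g x y) x y = d_h f x y + d_h g x y.
Proof. exact: (deltaD (fun x => f x y) (fun x => g x y)). Qed.
Lemma d_hN f x y : d_h (fun x y => - f x y) x y = - d_h f x y.
Proof. exact: (deltaN (fun x => f x y)). Qed.
Lemma d_hB f g x y : d_h (fun x y => f x y - g x y) x y = d_h f x y - d_h g x y.
Proof. by rewrite d_hD d_hN. Qed.
Lemma d_h_z f x y : (forall x y, f x y = 0) -> d_h f x y = 0.
Proof. by move=> h; apply: (delta_z (F := fun x => f x y)). Qed.
Lemma d_vD f g x y : d_v (fun x y => f x y + g x y) x y = d_v f x y + d_v g x y.
Proof.
transitivity ((delta (f x) y + delta (g x) y) *~ sg p); last by rewrite mulrzDl.
by congr (_ *~ _); exact: deltaD.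
Qed.
Lemma d_vN f x y : d_v (fun x y => - f x y) x y = - d_v f x y.
Proof.
transitivity ((- delta (f x) y) *~ sg p); last by rewrite mulNrz.
by congr (_ *~ _); exact: deltaN.
Qed.
Lemma d_vB f g x y : d_v (fun x y => f x y - g x y) x y = d_v f x y - d_v g x y.
Proof. by rewrite d_vD d_vN. Qed.
Lemma d_v_z f x y : (forall x y, f x y = 0) -> d_v f x y = 0.
Proof.
move=> h; transitivity ((0:A) *~ sg p); last by rewrite mul0rz.
by congr (_ *~ _); apply: (delta_z (F := f x)) => y0; exact: h.
Qed.
Lemma d_hh (f : ('I_p.+1 -> T) -> ('I_q.+1 -> T) -> A) x y : d_h (d_h f) x y = 0.
Proof. exact: (delta2 (fun x => f x y)). Qed.
Lemma d_vv f x y : d_v (d_v f) x y = 0.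
Proof.
transitivity ((delta (delta (f x)) y *~ sg p) *~ sg p).
  by congr (_ *~ _); exact: (deltaZ (delta (f x))).
by rewrite (delta2 (f x)) !mul0rz.
Qed.
Lemma d_hv f x y : d_h (d_v f) x y + d_v (d_h f) x y = 0.
Proof.
have E1 : d_h (d_v f) x y = \sum_(i < p.+2) \sum_(j < q.+2)
   f (fun k => x (lift i k)) (fun k => y (lift j k)) *~ (sg j * sg p * sg i).
  rewrite /d_h /d_v /delta; apply: eq_bigr => i _.
  rewrite !mulrz_suml; apply: eq_bigr => j _; by rewrite !mulrzA.
have E2 : d_v (d_h f) x y = \sum_(i < p.+2) \sum_(j < q.+2)
   f (fun k => x (lift i k)) (fun k => y (lift j k)) *~ (sg i * sg j * sg p.+1).
  rewrite /d_h /d_v /delta exchange_big /= mulrz_suml; apply: eq_bigr => j _.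
  rewrite !mulrz_suml; apply: eq_bigr => i _; by rewrite !mulrzA.
rewrite E1 E2 -big_split /=; apply: big1 => i _; rewrite -big_split /=.
apply: big1 => j _; rewrite -mulrzDr.
have -> : sg j * sg p * sg i + sg i * sg j * sg p.+1 = 0 by rewrite exprS; ring.
by rewrite mulr0z.
Qed.
End DHV.

Definition Dh (F : TT) : TT := fun p q x y =>
  match p as p0 return ('I_p0.+1 -> T) -> A with
  | 0 => fun _ => 0
  | p'.+1 => fun x' => d_h (F p' q) x' y
  end x.
Definition Dv (F : TT) : TT := fun p q x y =>
  match q as q0 return ('I_q0.+1 -> T) -> A with
  | 0 => fun _ => 0
  | q'.+1 => fun y' => d_v (F p q') x y'
  end y.
Definition Tadd (F G : TT) : TT := fun p q x y => F p q x y + G p q x y.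
Definition T0 : TT := fun p q x y => 0.

Lemma TTeq (F G : TT) : (forall p q x y, F p q x y = G p q x y) -> F = G.
Proof.
move=> h; apply: functional_extensionality_dep => p.
apply: functional_extensionality_dep => q.
by apply: funext => x; apply: funext => y.
Qed.

Lemma dTE (F : TT) p q (x : 'I_p.+1 -> T) (y : 'I_q.+1 -> T) : dT F x y = Dh F x y + Dv F x y.
Proof. by []. Qed.

Lemma DhD (F G : TT) p q (x : 'I_p.+1 -> T) (y : 'I_q.+1 -> T) : Dh (Tadd F G) x y = Dh F x y + Dh G x y.
Proof. case: p x => [|p] x /=; [by rewrite addr0 | exact: d_hD]. Qed.
Lemma DvD (F G : TT) p q (x : 'I_p.+1 -> T) (y : 'I_q.+1 -> T) : Dv (Tadd F G) x y = Dv F x y + Dv G x y.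
Proof. case: q y => [|q] y /=; [by rewrite addr0 | exact: d_vD]. Qed.
Lemma DhB (F G : TT) p q (x : 'I_p.+1 -> T) (y : 'I_q.+1 -> T) : Dh (Tsub F G) x y = Dh F x y - Dh G x y.
Proof. case: p x => [|p] x /=; [by rewrite subr0 | exact: d_hB]. Qed.
Lemma DvB (F G : TT) p q (x : 'I_p.+1 -> T) (y : 'I_q.+1 -> T) : Dv (Tsub F G) x y = Dv F x y - Dv G x y.
Proof. case: q y => [|q] y /=; [by rewrite subr0 | exact: d_vB]. Qed.
Lemma Dh_z (F : TT) p q (x : 'I_p.+1 -> T) (y : 'I_q.+1 -> T) : (forall p q x y, F p q x y = 0) -> Dh F x y = 0.
Proof. by case: p x => [|p] x //= h; apply: d_h_z => *; apply: h. Qed.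
Lemma Dv_z (F : TT) p q (x : 'I_p.+1 -> T) (y : 'I_q.+1 -> T) : (forall p q x y, F p q x y = 0) -> Dv F x y = 0.
Proof. by case: q y => [|q] y //= h; apply: d_v_z => *; apply: h. Qed.

Lemma DhDh (F : TT) p q (x : 'I_p.+1 -> T) (y : 'I_q.+1 -> T) : Dh (Dh F) x y = 0.
Proof.
case: p x => [|[|p]] x //=; first by apply: d_h_z.
exact: d_hh.
Qed.
Lemma DvDv (F : TT) p q (x : 'I_p.+1 -> T) (y : 'I_q.+1 -> T) : Dv (Dv F) x y = 0.
Proof.
case: q y => [|[|q]] y //=; first by apply: d_v_z.
exact: d_vv.
Qed.
Lemma DhDv (F : TT) p q (x : 'I_p.+1 -> T) (y : 'I_q.+1 -> T) : Dh (Dv F) x y + Dv (Dh F) x y = 0.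
Proof.
case: p x => [|p] x; case: q y => [|q] y /=; rewrite ?addr0 ?add0r //.
- by apply: d_v_z.
- by apply: d_h_z.
- exact: d_hv.
Qed.

Lemma dTdT (F : TT) p q (x : 'I_p.+1 -> T) (y : 'I_q.+1 -> T) : dT (dT F) x y = 0.
Proof.
change (Dh (Tadd (Dh F) (Dv F)) x y + Dv (Tadd (Dh F) (Dv F)) x y = 0).
rewrite DhD DvD DhDh DvDv add0r addr0 addrC.
by rewrite addrC DhDv.
Qed.

Lemma dTB (F G : TT) p q (x : 'I_p.+1 -> T) (y : 'I_q.+1 -> T) : dT (Tsub F G) x y = dT F x y - dT G x y.
Proof. rewrite !dTE DhB DvB. by rewrite addrACA opprD. Qed.
Lemma dTD (F G : TT) p q (x : 'I_p.+1 -> T) (y : 'I_q.+1 -> T) : dT (Tadd F G) x y = dT F x y + dT G x y.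
Proof. rewrite !dTE DhD DvD. by rewrite addrACA. Qed.
Lemma dT_z (F : TT) p q (x : 'I_p.+1 -> T) (y : 'I_q.+1 -> T) : (forall p q x y, F p q x y = 0) -> dT F x y = 0.
Proof. by move=> h; rewrite dTE Dh_z // Dv_z // addr0. Qed.

Local Notation Gam U q := (@Gamma _ mul inv U q).
Lemma Gamma_mono (U V : set T) q : U `<=` V -> Gam U q `<=` Gam V q.
Proof. by case: q => [|q] //= h y hy i j; apply: h; apply: hy. Qed.
Lemma Gamma_lift (U : set T) q (i : 'I_q.+2) (y : Tup q.+1) :
  Gam U q.+1 y -> Gam U q ((fun k => y (lift i k)) : Tup q).
Proof. by case: q i y => [|q] i y //= hy i' j'; apply: hy. Qed.

Definition tcons p (a : T) (x : 'I_p.+1 -> T) : 'I_p.+2 -> T :=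
  fun i => if nat_of_ord i is k.+1 then x (inord k) else a.

Section Alc.
Variables (p q : nat).
Implicit Types (f g : ('I_p.+1 -> T) -> ('I_q.+1 -> T) -> A).
Local Notation Alc := (A_lc mul inv e).

Lemma Alc0 : Alc (fun (_ : 'I_p.+1 -> T) (_ : 'I_q.+1 -> T) => 0 : A).
Proof. exists setT; split; [exact: filterT | exact: cw_cst]. Qed.

Lemma Alc_add f g : Alc f -> Alc g -> Alc (fun x y => f x y + g x y).
Proof.
move=> [U [hU cf]] [V [hV cg]]; exists (U `&` V); split; first exact: filterI.
apply: cw_add.
- by apply: continuous_subspaceW cf => xy /=; apply: Gamma_mono => ? [].
- by apply: continuous_subspaceW cg => xy /=; apply: Gamma_mono => ? [].
Qed.
Lemma Alc_opp f : Alc f -> Alc (fun x y => - f x y).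
Proof.
move=> [U [hU cf]]; exists U; split => //.
exact: cw_opp.
Qed.
Lemma Alc_sub f g : Alc f -> Alc g -> Alc (fun x y => f x y - g x y).
Proof. by move=> hf hg; apply: Alc_add => //; apply: Alc_opp. Qed.

Lemma Alc_dh f : Alc f -> Alc (d_h f).
Proof.
move=> [U [hU cf]]; exists U; split => //.
change {within [set xy : Tup p.+1 * Tup q | Gam U q xy.2], continuous (fun xy : Tup p.+1 * Tup q => \sum_(i < p.+2) f (fun j => xy.1 (lift i j)) xy.2 *~ sg i)}.
refine (@cw_sum _ _ [set xy : Tup p.+1 * Tup q | Gam U q xy.2] 'I_p.+2 (index_enum 'I_p.+2) (fun i xy => f (fun j => xy.1 (lift i j)) xy.2 *~ sg i) _) => i.
apply: cw_mulrz.
refine (@cw_comp _ _ _ [set xy : Tup p.+1 * Tup q | Gam U q xy.2] [set xy : Tup p * Tup q | Gam U q xy.2] (fun xy => f xy.1 xy.2)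
   (fun xy : Tup p.+1 * Tup q => ((fun j => xy.1 (lift i j)) : Tup p, xy.2)) cf _ _) => //.
apply: cont_pair; last exact: cont_snd.
apply: cont_ptws => j; apply: (cont_comp2 (f := fst) (g := fun x : Tup p.+1 => x (lift i j))); [exact: cont_fst | exact: cont_coord].
Qed.

Lemma Alc_dv f : Alc f -> Alc (d_v f).
Proof.
move=> [U [hU cf]]; exists U; split => //.
refine (@cw_mulrz _ _ [set xy : Tup p * Tup q.+1 | Gam U q.+1 xy.2] (fun xy => delta (f xy.1) xy.2) _ _).
refine (@cw_sum _ _ [set xy : Tup p * Tup q.+1 | Gam U q.+1 xy.2] 'I_q.+2 (index_enum 'I_q.+2) (fun i xy => f xy.1 (fun j => xy.2 (lift i j)) *~ sg i) _) => i.
apply: cw_mulrz.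
refine (@cw_comp _ _ _ [set xy : Tup p * Tup q.+1 | Gam U q.+1 xy.2] [set xy : Tup p * Tup q | Gam U q xy.2] (fun xy => f xy.1 xy.2)
   (fun xy : Tup p * Tup q.+1 => (xy.1, (fun j => xy.2 (lift i j)) : Tup q)) cf _ _).
- apply: cont_pair; first exact: cont_fst.
  apply: cont_ptws => j; apply: (cont_comp2 (f := snd) (g := fun x : Tup q.+1 => x (lift i j))); [exact: cont_snd | exact: cont_coord].
- by move=> [x y] /= hy; apply: Gamma_lift.
Qed.
End Alc.

Lemma Alc_h p q (f : ('I_p.+2 -> T) -> ('I_q.+1 -> T) -> A) :
  A_lc mul inv e f -> A_lc mul inv e (fun x y => f (tcons (y ord0) x) y).
Proof.
move=> [U [hU cf]]; exists U; split => //.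
refine (@cw_comp _ _ _ [set xy : Tup p * Tup q | Gam U q xy.2] [set xy : Tup p.+1 * Tup q | Gam U q xy.2] (fun xy => f xy.1 xy.2)
   (fun xy : Tup p * Tup q => (tcons (xy.2 ord0) xy.1 : Tup p.+1, xy.2)) cf _ _) => //.
apply: cont_pair; last exact: cont_snd.
apply: cont_ptws => -[[|k] hk] /=.
- apply: (cont_comp2 (f := snd) (g := fun x : Tup q => x ord0)); [exact: cont_snd | exact: cont_coord].
- apply: (cont_comp2 (f := fst) (g := fun x : Tup p => x (inord k))); [exact: cont_fst | exact: cont_coord].
Qed.

Section Inv.
Variables (p q : nat).
Implicit Types (f g : ('I_p.+1 -> T) -> ('I_q.+1 -> T) -> A).
Local Notation Inv := (Defs.invariant mul inv act).
Lemma inv0 : Inv (fun (_ : 'I_p.+1 -> T) (_ : 'I_q.+1 -> T) => 0 : A).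
Proof. by move=> g x y; rewrite act0. Qed.
Lemma inv_add f g : Inv f -> Inv g -> Inv (fun x y => f x y + g x y).
Proof. by move=> hf hg h x y; rewrite actD hf hg. Qed.
Lemma inv_opp f : Inv f -> Inv (fun x y => - f x y).
Proof. by move=> hf h x y; rewrite actN hf. Qed.
Lemma inv_sub f g : Inv f -> Inv g -> Inv (fun x y => f x y - g x y).
Proof. by move=> hf hg; apply: inv_add => //; apply: inv_opp. Qed.
Lemma inv_dh f : Inv f -> Inv (d_h f).
Proof.
move=> hf g x y; rewrite /d_h /delta act_sum; apply: eq_bigr => i _.
by rewrite act_mulrz; congr (_ *~ _); exact: hf.
Qed.
Lemma inv_dv f : Inv f -> Inv (d_v f).
Proof.
move=> hf g x y; rewrite /d_v /delta act_mulrz act_sum; congr (_ *~ _).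
apply: eq_bigr => i _.
by rewrite act_mulrz; congr (_ *~ _); exact: hf.
Qed.
End Inv.

Lemma inv_h p q (f : ('I_p.+2 -> T) -> ('I_q.+1 -> T) -> A) :
  Defs.invariant mul inv act f ->
  Defs.invariant mul inv act (fun x y => f (tcons (y ord0) x) y).
Proof.
move=> hf g x y /=.
have -> : tcons (mul (inv g) (y ord0)) (fun i => mul (inv g) (x i)) =
          (fun i => mul (inv g) (tcons (y ord0) x i)).
  by apply: funext => i; rewrite /tcons; case: (nat_of_ord i).
exact: hf.
Qed.

Local Notation Tot n F := (Defs.Tot mul inv e act n F).

Lemma Tot0 n : Tot n T0.
Proof. move=> p q; split => // _; split; [exact: Alc0 | exact: inv0]. Qed.

Lemma TotB n (F G : TT) : Tot n F -> Tot n G -> Tot n (Tsub F G).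
Proof.
move=> hF hG p q; split.
- move=> pq; have [aF iF] := (hF p q).1 pq; have [aG iG] := (hG p q).1 pq.
  split; [exact: Alc_sub | exact: inv_sub].
- by move=> pq x y; rewrite /Tsub (hF p q).2 // (hG p q).2 // subr0.
Qed.
Lemma TotD n (F G : TT) : Tot n F -> Tot n G -> Tot n (Tadd F G).
Proof.
move=> hF hG p q; split.
- move=> pq; have [aF iF] := (hF p q).1 pq; have [aG iG] := (hG p q).1 pq.
  split; [exact: Alc_add | exact: inv_add].
- by move=> pq x y; rewrite /Tadd (hF p q).2 // (hG p q).2 // addr0.
Qed.

Lemma Alc_Dh n (F : TT) p q : Tot n F -> (p + q = n.+1)%N ->
  A_lc mul inv e (fun x y => @Dh F p q x y).
Proof.
case: p => [|p] hF pq /=; first exact: Alc0.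
apply: Alc_dh; apply: ((hF p q).1 _).1; lia.
Qed.
Lemma Alc_Dv n (F : TT) p q : Tot n F -> (p + q = n.+1)%N ->
  A_lc mul inv e (fun x y => @Dv F p q x y).
Proof.
case: q => [|q] hF pq /=; first exact: Alc0.
apply: Alc_dv; apply: ((hF p q).1 _).1; lia.
Qed.
Lemma inv_Dh n (F : TT) p q : Tot n F -> (p + q = n.+1)%N ->
  Defs.invariant mul inv act (fun x y => @Dh F p q x y).
Proof.
case: p => [|p] hF pq /=; first exact: inv0.
apply: inv_dh; apply: ((hF p q).1 _).2; lia.
Qed.
Lemma inv_Dv n (F : TT) p q : Tot n F -> (p + q = n.+1)%N ->
  Defs.invariant mul inv act (fun x y => @Dv F p q x y).
Proof.
case: q => [|q] hF pq /=; first exact: inv0.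
apply: inv_dv; apply: ((hF p q).1 _).2; lia.
Qed.
Lemma Dh_off n (F : TT) p q (x : 'I_p.+1 -> T) (y : 'I_q.+1 -> T) :
  Tot n F -> (p + q <> n.+1)%N -> Dh F x y = 0.
Proof.
case: p x => [|p] x hF pq //=; apply: d_h_z => x' y'; apply: (hF p q).2; lia.
Qed.
Lemma Dv_off n (F : TT) p q (x : 'I_p.+1 -> T) (y : 'I_q.+1 -> T) :
  Tot n F -> (p + q <> n.+1)%N -> Dv F x y = 0.
Proof.
case: q y => [|q] y hF pq //=; apply: d_v_z => x' y'; apply: (hF p q).2; lia.
Qed.

Lemma TotdT n (F : TT) : Tot n F -> Tot n.+1 (dT F).
Proof.
move=> hF p q; split.
- move=> pq; split.
  + exact: (Alc_add (Alc_Dh hF pq) (Alc_Dv hF pq)).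
  + exact: (inv_add (inv_Dh hF pq) (inv_Dv hF pq)).
- by move=> pq x y; rewrite dTE (Dh_off _ _ hF pq) (Dv_off _ _ hF pq) addr0.
Qed.

Lemma tcons0 p a (x : 'I_p.+1 -> T) : (fun j => tcons a x (lift ord0 j)) = x.
Proof. by apply: funext => j; rewrite /tcons lift0 inord_val. Qed.

Lemma tcons_lift p a (x : 'I_p.+2 -> T) (i : 'I_p.+2) :
  (fun j => tcons a x (lift (lift ord0 i) j)) = tcons a (fun j => x (lift i j)).
Proof.
apply: funext => j; rewrite /tcons.
case: j => -[|k] hk //=.
have -> : bump (bump 0 i) k.+1 = (bump i k).+1 by rewrite /bump /= add1n ltnS addnS.
congr x; apply: ord_inj; rewrite /= !inordK //.
move: hk; rewrite /bump /=; case: (leqP i k) => _ /= hk; rewrite ?add0n ?add1n; lia.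
Qed.

Lemma tcons_one a (x : 'I_1 -> T) :
  (fun j : 'I_1 => tcons a x (lift (lift ord0 ord0) j)) = (fun _ => a).
Proof. by apply: funext => -[[|k] hk]. Qed.

Lemma homot p q (f : ('I_p.+2 -> T) -> ('I_q.+1 -> T) -> A) x y :
  f x y = d_h (fun x' y' => f (tcons (y' ord0) x') y') x y + d_h f (tcons (y ord0) x) y.
Proof.
rewrite /d_h /delta [X in _ = _ + X]big_ord_recl /= tcons0 expr0 mulr1z.
have b0 : forall i, bump 0 i = i.+1 by move=> i; rewrite /bump add1n.
under [X in _ = _ + (_ + X)]eq_bigr => i _ do rewrite tcons_lift b0 exprS mulN1r mulrNz.
by rewrite sumrN addrCA subrr addr0.
Qed.

Lemma base_indep q (f : ('I_1 -> T) -> ('I_q.+1 -> T) -> A) :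
  (forall x y, d_h f x y = 0) -> forall x y, f x y = f (fun _ => y ord0) y.
Proof.
move=> h x y; have := h (tcons (y ord0) x) y.
rewrite /d_h /delta !big_ord_recl big_ord0 /= tcons0 expr0 mulr1z tcons_one.
rewrite (_ : bump 0 0 = 1%N) // expr1 mulrN1z addr0 => /eqP.
by rewrite subr_eq0 => /eqP.
Qed.

Local Notation Cob m D := (T_cobound mul inv e act m D).

Lemma d_h_ext p q (f g : ('I_p.+1 -> T) -> ('I_q.+1 -> T) -> A) x y :
  (forall x y, f x y = g x y) -> d_h f x y = d_h g x y.
Proof. by move=> h; have -> : f = g by apply: funext => x'; apply: funext => y'. Qed.
Lemma d_v_ext p q (f g : ('I_p.+1 -> T) -> ('I_q.+1 -> T) -> A) x y :
  (forall x y, f x y = g x y) -> d_v f x y = d_v g x y.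
Proof. by move=> h; have -> : f = g by apply: funext => x'; apply: funext => y'. Qed.

Lemma cob_zero m (D : TT) : (forall p q x y, D p q x y = 0) -> Cob m D.
Proof.
case: m => [|m] h //=; exists T0; split; first exact: Tot0.
by apply: TTeq => p q x y; rewrite h; apply: dT_z.
Qed.

Lemma cob_closed m (D : TT) p q (x : 'I_p.+1 -> T) (y : 'I_q.+1 -> T) :
  Cob m D -> dT D x y = 0.
Proof.
case: m => [|m] /=; first by move=> h; apply: dT_z.
by move=> [W [_ <-]]; exact: dTdT.
Qed.

Lemma cob_trans m (F G H : TT) : Cob m (Tsub F G) -> Cob m (Tsub G H) -> Cob m (Tsub F H).
Proof.
case: m => [|m] /=.
  move=> h1 h2 p q x y; move: (h1 p q x y) (h2 p q x y); rewrite /Tsub.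
  by move=> /subr0_eq -> /subr0_eq ->; rewrite subrr.
move=> [W1 [t1 e1]] [W2 [t2 e2]]; exists (Tadd W1 W2); split; first exact: TotD.
apply: TTeq => p q x y; rewrite dTD e1 e2 /Tsub.
by rewrite addrA subrK.
Qed.

Lemma cob_sym m (F G : TT) : Cob m (Tsub F G) -> Cob m (Tsub G F).
Proof.
case: m => [|m] /=.
  move=> h p q x y; move: (h p q x y); rewrite /Tsub.
  by move=> /subr0_eq ->; rewrite subrr.
move=> [W [t1 e1]]; exists (Tsub T0 W); split; first by apply: TotB => //; exact: Tot0.
apply: TTeq => p q x y; rewrite dTB e1 /Tsub dT_z //.
by rewrite sub0r opprB.
Qed.

Lemma stair m k : forall W : TT, Tot m W ->
  (forall p q (x : 'I_p.+1 -> T) (y : 'I_q.+1 -> T), (k < p)%N -> W p q x y = 0) ->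
  (forall p q (x : 'I_p.+1 -> T) (y : 'I_q.+1 -> T), (0 < p)%N -> dT W x y = 0) ->
  exists W' : TT, [/\ Tot m W',
    (forall p q (x : 'I_p.+1 -> T) (y : 'I_q.+1 -> T), (0 < p)%N -> W' p q x y = 0) &
    Cob m (Tsub W W')].
Proof.
elim: k => [|k IH] W hW hs hd.
  exists W; split; [done | by move=> p q x y; apply: hs | ].
  by apply: cob_zero => p q x y; rewrite /Tsub subrr.
case: (leqP m k) => mk.
  by apply: IH => // p q x y kp; apply: (hW p q).2; lia.
have [m' em] : exists m', m = m'.+1 by exists m.-1; lia.
subst m.
pose V : TT := fun p q x y => if p == k then W p.+1 q (tcons (y ord0) x) y else 0.
have hV : Tot m' V.
  move=> p q; split.
  - move=> pq; rewrite /V; case: (eqVneq p k) => [epk|npk].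
      subst p; have [a1 i1] := (hW k.+1 q).1 ltac:(lia).
      by split; [exact: Alc_h | exact: inv_h].
    by split; [exact: Alc0 | exact: inv0].
  - move=> pq x y; rewrite /V; case: (eqVneq p k) => [epk|npk] //.
    subst p; apply: (hW k.+1 q).2; lia.
pose W1 := Tsub W (dT V).
have hW1 : Tot m'.+1 W1 by apply: TotB => //; exact: TotdT.
have hd1 : forall p q (x : 'I_p.+1 -> T) (y : 'I_q.+1 -> T), (0 < p)%N -> dT W1 x y = 0.
  by move=> p q x y hp; rewrite dTB dTdT subr0 hd.
have dW : forall q (x : 'I_k.+3 -> T) (y : 'I_q.+1 -> T), d_h (W k.+1 q) x y = 0.
  move=> q x y; have := hd k.+2 q x y isT; rewrite dTE /=.
  have -> : Dv W x y = 0.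
    case: q x y => [|q] x y //=; apply: d_v_z => x' y'; apply: hs; lia.
  by rewrite addr0.
have hs1 : forall p q (x : 'I_p.+1 -> T) (y : 'I_q.+1 -> T), (k < p)%N -> W1 p q x y = 0.
  move=> p q x y kp; rewrite /W1 /Tsub dTE.
  have -> : Dv V x y = 0.
    case: q y => [|q] y //=; apply: d_v_z => x' y'; rewrite /V.
    case: (eqVneq p k) => // epk; lia.
  case: p x kp => [|p] x kp //=.
  case: (eqVneq p k) => [epk|npk].
    subst p; rewrite addr0 (homot (W k.+1 q) x y) dW addr0.
    rewrite (@d_h_ext _ _ (V k q) (fun x y => W k.+1 q (tcons (y ord0) x) y)) ?subrr //.
    by move=> x' y'; rewrite /V eqxx.
  rewrite hs; last by lia.
  rewrite d_h_z; first by rewrite addr0 subrr.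
  move=> x' y'; rewrite /V.
  by case: (eqVneq p k) => // epk; lia.
have [W' [h1 h2 h3]] := IH W1 hW1 hs1 hd1.
exists W'; split => //.
apply: cob_trans h3; exists V; split => //.
by apply: TTeq => p q x y; rewrite /W1 /Tsub opprB addrC subrK.
Qed.

Lemma j_h_diag n (c : CC T A n) (x : 'I_1 -> T) (y : 'I_n.+1 -> T) : j_h c x y = c y.
Proof.
rewrite /j_h !eqxx /=.
by have -> : (fun i : 'I_n.+1 => y (inord i)) = y by apply: funext => i; rewrite inord_val.
Qed.

Lemma j_h_off n (c : CC T A n) p q (x : 'I_p.+1 -> T) (y : 'I_q.+1 -> T) :
  (p != 0%N) || (q != n) -> j_h c x y = 0.
Proof. by move=> h; rewrite /j_h ifF //; apply/negbTE; rewrite negb_and. Qed.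

Lemma d_h_const0 q (f : ('I_1 -> T) -> ('I_q.+1 -> T) -> A) x y :
  (forall x1 x2, f x1 y = f x2 y) -> d_h f x y = 0.
Proof.
move=> h; rewrite /d_h /delta !big_ord_recl big_ord0 /=.
rewrite (h (fun j => x (lift (lift ord0 ord0) j)) (fun j => x (lift ord0 j))).
by rewrite (_ : bump 0 0 = 1%N) // expr0 expr1 mulr1z mulrN1z addr0 subrr.
Qed.

Lemma Tot_jh n (c : CC T A n) : C_lc mul inv e act c -> Tot n (j_h c).
Proof.
move=> [eqc [U [hU cc]]] p q; split; last first.
  move=> pq x y; apply: j_h_off.
  by case: (eqVneq p 0%N) => [ep|np] //=; apply/eqP; lia.
move=> pq; case: (eqVneq p 0%N) => [ep|np]; last first.
  have -> : @j_h _ _ n c p q = fun _ _ => 0.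
    by apply: funext => x; apply: funext => y; rewrite j_h_off ?np.
  by split; [exact: Alc0 | exact: inv0].
subst p; have eq : q = n by lia.
subst q.
have -> : @j_h _ _ n c 0 n = fun _ y => c y.
  by apply: funext => x; apply: funext => y; rewrite j_h_diag.
split.
  exists U; split => //.
  refine (@cw_comp _ _ _ [set xy : Tup 0 * Tup n | Gam U n xy.2] (Gam U n) c snd cc _ _) => //.
  exact: cont_snd.
by move=> g x y; exact: eqc.
Qed.

Lemma dT_jh n (c : CC T A n) : dT (j_h c) = j_h (dC c).
Proof.
apply: TTeq => p q x y; rewrite dTE.
case: p x => [|p] x; case: q y => [|q] y /=.
- by rewrite addr0 j_h_off.
- rewrite add0r; case: (eqVneq q n) => [eq|nq].
    subst q; rewrite j_h_diag (@d_v_ext _ _ _ (fun _ y => c y)); last first.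
      by move=> *; rewrite j_h_diag.
    by rewrite /d_v expr0 mulr1z.
  rewrite (j_h_off (dC c) x y); last by rewrite /= eqSS nq.
  by apply: d_v_z => *; rewrite j_h_off ?nq ?orbT.
- rewrite addr0 j_h_off //.
  case: p x => [|p] x; first by apply: d_h_const0.
  by apply: d_h_z => *; rewrite j_h_off.
- rewrite (@d_v_z _ _ _ x y); last by move=> *; rewrite j_h_off.
  rewrite addr0 j_h_off //.
  case: p x => [|p] x; first by apply: d_h_const0.
  by apply: d_h_z => *; rewrite j_h_off.
Qed.

Lemma Clc_of n (f : ('I_1 -> T) -> ('I_n.+1 -> T) -> A) :
  A_lc mul inv e f -> Defs.invariant mul inv act f ->
  C_lc mul inv e act (fun y : Tup n => f (fun _ => y ord0) y).
Proof.
move=> [U [hU cf]] hi; split.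
  move=> g y /=; exact: (hi g (fun _ => y ord0) y).
exists U; split => //.
refine (@cw_comp _ _ _ (Gam U n) [set xy : Tup 0 * Tup n | Gam U n xy.2] (fun xy => f xy.1 xy.2)
   (fun y : Tup n => ((fun _ => y ord0) : Tup 0, y)) cf _ _) => //.
apply: cont_pair; last by move=> y; exact: cvg_id.
apply: cont_ptws => j; exact: cont_coord.
Qed.

Lemma base_dh (W : TT) q (x : 'I_2 -> T) (y : 'I_q.+1 -> T) :
  (forall p q (x : 'I_p.+1 -> T) (y : 'I_q.+1 -> T), (0 < p)%N -> W p q x y = 0) ->
  d_h (W 0%N q) x y = dT W x y.
Proof.
move=> h2; rewrite dTE /=.
suff -> : Dv W x y = 0 by rewrite addr0.
by case: q y => [|q] y //=; apply: d_v_z => *; apply: h2.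
Qed.

Lemma inj_part n (c : CC T A n) : C_lc mul inv e act c -> Cob n (j_h c) ->
  C_cobound mul inv e act c.
Proof.
case: n c => [|m] c hc /=.
  by move=> h x; have := h 0%N 0%N x x; rewrite j_h_diag.
move=> [W [hW eW]].
have [W' [h1 h2 h3]] := @stair m m W hW
  (fun p q x y mp => (hW p q).2 ltac:(lia) x y)
  (fun p q x y hp => etrans (f_equal (fun F : TT => F p q x y) eW) (j_h_off c x y ltac:(by case: p x hp))).
have dW' : forall p q (x : 'I_p.+1 -> T) (y : 'I_q.+1 -> T), dT W' x y = j_h c x y.
  move=> p q x y; have := cob_closed x y h3; rewrite dTB eW.
  by move=> /subr0_eq ->.
have indep : forall x y, W' 0%N m x y = W' 0%N m (fun _ => y ord0) y.
  apply: base_indep => x y; rewrite base_dh // dW' j_h_off //.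
exists (fun y : Tup m => W' 0%N m (fun _ => y ord0) y); split.
  by apply: Clc_of; [exact: ((h1 0%N m).1 erefl).1 | exact: ((h1 0%N m).1 erefl).2].
apply: funext => y; have := dW' 0%N m.+1 (fun _ => y ord0) y.
rewrite j_h_diag dTE /= add0r => <-.
rewrite /d_v expr0 mulr1z /dC /delta; apply: eq_bigr => i _.
by rewrite [in RHS]indep.
Qed.

Lemma surj_part n (z : TT) : Tot n z -> dT z = (fun p q _ _ => 0) ->
  exists c : CC T A n, [/\ C_lc mul inv e act c, dC c = (fun _ => 0) &
                           Cob n (Tsub (j_h c) z)].
Proof.
move=> hz ez.
have [z' [h1 h2 h3]] := @stair n n z hz
  (fun p q x y mp => (hz p q).2 ltac:(lia) x y)
  (fun p q x y hp => f_equal (fun F : TT => F p q x y) ez).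
have dz' : forall p q (x : 'I_p.+1 -> T) (y : 'I_q.+1 -> T), dT z' x y = 0.
  move=> p q x y; have := cob_closed x y h3; rewrite dTB ez.
  by move=> /subr0_eq <-.
have indep : forall x y, z' 0%N n x y = z' 0%N n (fun _ => y ord0) y.
  by apply: base_indep => x y; rewrite base_dh // dz'.
pose c := fun y : Tup n => z' 0%N n (fun _ => y ord0) y.
have ejc : j_h c = z'.
  apply: TTeq => p q x y; case: (eqVneq p 0%N) => [ep|np]; last first.
    by rewrite j_h_off ?np // h2 //; lia.
  subst p; case: (eqVneq q n) => [eq|nq].
    by subst q; rewrite j_h_diag /c (indep x y).
  by rewrite j_h_off ?nq ?orbT // ((h1 0%N q).2 _ x y) //; lia.
exists c; split.
- by apply: Clc_of; [exact: ((h1 0%N n).1 erefl).1 | exact: ((h1 0%N n).1 erefl).2].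
- apply: funext => y.
  by rewrite -(j_h_diag (dC c) (fun _ => y ord0) y) -dT_jh ejc dz'.
- by rewrite ejc; apply: cob_sym.
Qed.
End Main.

Theorem mainTheorem1 (T : topologicalType) (mul : T -> T -> T) (inv : T -> T) (e : T)
  (A : topologicalZmodType) (act : T -> A -> A) :
  is_topological_group mul inv e ->
  is_topological_G_module mul e act ->
  jh_quasi_iso mul inv e act.
Proof.
move=> _ [actD _ _ _]; split; [|split; [|split]].
- by move=> n c hc; exact: Tot_jh.
- by move=> n c hc; exact: dT_jh.
- by move=> n c hc _ hb; exact: inj_part.
- by move=> n z hz hd; exact: surj_part.
Qed.
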